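(* Let $G^\dagger=(V^\dagger,E^\dagger)$ be a graph whose vertex set is partitioned into ''blossom'' vertices and ''non-blossom'' vertices, and let $w^\dagger\in\mathbb{R}^{|E^\dagger|}$. Consider the LP: minimize $w^\dagger\cdot x$ subject to $\sum_{e\in\delta(v)}x_e=1$ for every non-blossom vertex $v\in V^\dagger$, $\sum_{e\in\delta(v)}x_e\ge 1$ for every blossom vertex $v\in V^\dagger$, and $x\in[0,1]^{|E^\dagger|}$. If this LP is feasible, then it has an optimal solution $x^*\in\{0,\tfrac12,1\}^{|E^\dagger|}$ such that the set of edges $e$ with $x^*_e=\tfrac12$ forms a collection of vertex-disjoint odd cycles.
   Context: $\delta(v)$ denotes the set of edges of $G^\dagger$ incident to $v$. *)

(* Defs.v *)
From HB Require Import structures.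
From mathcomp Require Import all_boot all_order all_algebra.
From mathcomp Require Import reals.
Set Implicit Arguments. Unset Strict Implicit. Unset Printing Implicit Defensive.
Import Order.TTheory GRing.Theory Num.Theory.
Local Open Scope ring_scope.

Definition simple_graph (V : finType) (E : {set {set V}}) : Prop :=
  forall e, e \in E -> #|e| = 2%N.

(* LP weights / points are functions on edges; only their values on E matter. *)
Definition lp_cost (R : realType) (V : finType) (E : {set {set V}})
  (w x : {set V} -> R) : R := \sum_(e in E) w e * x e.

Definition deg_sum (R : realType) (V : finType) (E : {set {set V}})
  (x : {set V} -> R) (v : V) : R := \sum_(e in E | v \in e) x e.

Definition lp_feasible (R : realType) (V : finType) (E : {set {set V}})
  (blossom : {set V}) (x : {set V} -> R) : Prop :=
  [/\ forall v, v \notin blossom -> deg_sum E x v = 1,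
      forall v, v \in blossom -> 1 <= deg_sum E x v
    & forall e, e \in E -> 0 <= x e <= 1].

Definition lp_optimal (R : realType) (V : finType) (E : {set {set V}})
  (blossom : {set V}) (w x : {set V} -> R) : Prop :=
  lp_feasible E blossom x /\
  forall y, lp_feasible E blossom y -> lp_cost E w x <= lp_cost E w y.

(* Edge set of the cycle v_0 v_1 ... v_{m-1} v_0 given by the sequence s. *)
Definition cycle_edges (V : finType) (s : seq V) : {set {set V}} :=
  [set [set p.1; p.2] | p in zip s (rot 1 s)].

Definition odd_cycle_seq (V : finType) (s : seq V) : bool :=
  [&& uniq s, (3 <= size s)%N & odd (size s)].

Definition disjoint_odd_cycles (V : finType) (F : {set {set V}}) : Prop :=
  exists cs : seq (seq V),
    [/\ all (@odd_cycle_seq V) cs,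
        uniq (flatten cs)
      & F = \bigcup_(c <- cs) cycle_edges c].

(* Main.v *)
Require Import Defs.
From HB Require Import structures.
From mathcomp Require Import all_boot all_order all_algebra.
From mathcomp Require Import reals.
From mathcomp Require Import zify ring lra.
From Stdlib Require Import Classical.
Set Implicit Arguments. Unset Strict Implicit. Unset Printing Implicit Defensive.




Section Cyc.
Variable V : finType.
Variable x0 : V.

Definition nxt (m i : nat) := if i.+1 < m then i.+1 else 0.
Definition prv (m j : nat) := if j == 0 then m.-1 else j.-1.
Definition ed (c : seq V) i := [set nth x0 c i; nth x0 c (nxt (size c) i)].

Lemma nth_rot1 (c : seq V) i : i < size c ->
  nth x0 (rot 1 c) i = nth x0 c (nxt (size c) i).
Proof.
case: c => [|a t] //= Hi; rewrite rot1_cons nth_rcons /nxt /=.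
rewrite ltnS; case: ifP => H1 //.
have -> : i == size t by lia.
by [].
Qed.

Lemma cycle_edgesP (c : seq V) e :
  reflect (exists2 i, i < size c & e = ed c i) (e \in cycle_edges c).
Proof.
apply: (iffP imsetP).
  case=> p /(nthP (x0, x0)) [i]; rewrite size_zip size_rot minnn => Hi <- ->.
  exists i => //; rewrite nth_zip ?size_rot //= nth_rot1 //.
move=> [i Hi ->]; exists (nth x0 c i, nth x0 (rot 1 c) i).
  rewrite -nth_zip ?size_rot //; apply: mem_nth; by rewrite size_zip size_rot minnn.
by rewrite /= nth_rot1.
Qed.

Lemma nxt_lt m i : 0 < m -> nxt m i < m.
Proof. rewrite /nxt; case: ifP => //. Qed.

Lemma prv_lt m j : j < m -> prv m j < m.
Proof. rewrite /prv; case: ifP => ?; lia. Qed.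

Lemma nxt_prv m i j : i < m -> j < m -> (nxt m i == j) = (i == prv m j).
Proof. rewrite /nxt /prv => Hi Hj; do 2 case: ifP => ?; lia. Qed.

Variable c : seq V.
Hypothesis uc : uniq c.
Hypothesis sc : 3 <= size c.

Lemma mem_ed_nth i j : i < size c -> j < size c ->
  (nth x0 c j \in ed c i) = (i == j) || (i == prv (size c) j).
Proof.
move=> Hi Hj; have Hn := @nxt_lt (size c) i.
rewrite !inE !(eq_sym (nth x0 c j)) !nth_uniq ?Hn //; try lia.
by rewrite nxt_prv // eq_sym.
Qed.

Lemma mem_ed i v : i < size c -> v \in ed c i -> v \in c.
Proof.
move=> Hi; rewrite !inE => /orP [] /eqP ->; apply: mem_nth => //.
by apply: nxt_lt; lia.
Qed.

Lemma prv_neq j : j < size c -> (j == prv (size c) j) = false.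
Proof. rewrite /prv => Hj; case: ifP => ?; lia. Qed.

Lemma ed_inj i j : i < size c -> j < size c -> ed c i = ed c j -> i = j.
Proof.
move=> Hi Hj E.
have : nth x0 c j \in ed c i by rewrite E !inE eqxx.
rewrite mem_ed_nth // => /orP [/eqP //|/eqP Hp].
have : nth x0 c (nxt (size c) j) \in ed c i by rewrite E !inE eqxx orbT.
rewrite mem_ed_nth ?nxt_lt //; last lia.
move: Hp; rewrite /prv /nxt; case: (ltnP j.+1 (size c)) => Hlt; case: (j =P 0) => Hj0; rewrite /=; try lia.
Qed.


Lemma ed_in j : j < size c -> ed c j \in cycle_edges c.
Proof. by move=> Hj; apply/cycle_edgesP; exists j. Qed.

Lemma cyc_closed (F : {set {set V}}) : cycle_edges c \subset F ->
  (forall v e, e \in F -> v \in e -> #|[set f in F | v \in f]| = 2) ->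
  forall j f, j < size c -> f \in F -> nth x0 c j \in f -> f \in cycle_edges c.
Proof.
move=> sF Fdeg j f Hj fF vf.
have Hp : prv (size c) j < size c by apply: prv_lt.
have e1 := ed_in Hj; have e2 := ed_in Hp.
have v1 : nth x0 c j \in ed c j by rewrite mem_ed_nth // eqxx.
have v2 : nth x0 c j \in ed c (prv (size c) j) by rewrite mem_ed_nth // eqxx orbT.
have S2 := Fdeg _ _ fF vf.
have sub : [set ed c j; ed c (prv (size c) j)] \subset [set f in F | nth x0 c j \in f].
  apply/subsetP => g; rewrite !inE => /orP [] /eqP ->; rewrite ?v1 ?v2 andbT;
  exact: (subsetP sF).
have c2 : #|[set ed c j; ed c (prv (size c) j)]| = 2.
  rewrite cards2; case: eqP => // /ed_inj H.
  by move: (H Hj Hp); move/eqP; rewrite prv_neq.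
have EQ : [set ed c j; ed c (prv (size c) j)] = [set f in F | nth x0 c j \in f].
  by apply/eqP; rewrite eqEcard sub S2 c2.
have : f \in [set f in F | nth x0 c j \in f] by rewrite inE fF vf.
by rewrite -EQ !inE => /orP [] /eqP ->.
Qed.

End Cyc.

Section Walk.
Variable V : finType.
Variable x0 : V.
Variable F : {set {set V}}.
Hypothesis F2 : forall e, e \in F -> #|e| = 2.
Hypothesis Fdeg : forall v e, e \in F -> v \in e -> #|[set f in F | v \in f]| = 2.

Definition pth (s : seq V) := [/\ uniq s, 2 <= size s &
  forall i, i.+1 < size s -> [set nth x0 s i; nth x0 s i.+1] \in F].

Lemma two_set (f : {set V}) z : #|f| = 2 -> z \in f -> exists2 u, u != z & f = [set z; u].
Proof.
move/eqP/cards2P => [p [q [pq ->]]]; rewrite !inE => /orP [] /eqP ->.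
  by exists q => //; rewrite eq_sym.
by exists p => //; rewrite setUC.
Qed.

Lemma walk_step s : pth s ->
  (exists u, u \notin s /\ pth (rcons s u)) \/
  exists c : seq V, [/\ uniq c, 3 <= size c & cycle_edges c \subset F].
Proof.
move=> [us s2 Hp]; set m := size s in s2 Hp.
set z := nth x0 s m.-1; set y := nth x0 s m.-2.
have f0F : [set y; z] \in F.
  have := Hp m.-2; have -> : m.-2.+1 = m.-1 by lia.
  by apply; lia.
have zf0 : z \in [set y; z] by rewrite !inE eqxx orbT.
have S2 := Fdeg f0F zf0.
have [f1 f1S f10] : exists2 f1, f1 \in [set f in F | z \in f] & f1 != [set y; z].
  move/eqP/cards2P: S2 => [a [b [ab EQ]]].
  have : [set y; z] \in [set f in F | z \in f] by rewrite inE f0F zf0.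
  rewrite EQ !inE => /orP [] /eqP H.
    by exists b; rewrite ?EQ ?inE ?eqxx ?orbT // H eq_sym.
  by exists a; rewrite ?EQ ?inE ?eqxx ?orbT // H.
move: f1S; rewrite inE => /andP [f1F zf1].
have [u uz f1E] := two_set (F2 f1F) zf1.
have uy : u != y.
  apply/eqP => uy; move: f10; by rewrite f1E uy setUC eqxx.
case: (boolP (u \in s)) => us'.
  right; set k := index u s.
  have km : k < m by rewrite index_mem.
  have nk : nth x0 s k = u by rewrite nth_index.
  have k1 : k != m.-1 by apply/eqP => E; move: uz; rewrite -nk E eqxx.
  have k2 : k != m.-2 by apply/eqP => E; move: uy; rewrite -nk E eqxx.
  exists (drop k s); split; first exact: drop_uniq.
    rewrite size_drop; lia.
  apply/subsetP => e /(cycle_edgesP x0) [i]; rewrite size_drop /ed size_drop !nth_drop => Hi ->.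
  rewrite /nxt; case: ifP => Hi1.
    by rewrite addnS; apply: Hp; lia.
  rewrite addn0 nk; have -> : k + i = m.-1 by lia.
  by rewrite -f1E.
left; exists u; split => //; split.
- by rewrite rcons_uniq us' us.
- by rewrite size_rcons; lia.
move=> i; rewrite size_rcons ltnS => Hi; rewrite !nth_rcons.
case: (ltnP i.+1 m) => Hi1.
  by rewrite (ltnW Hi1) Hp.
have -> : i < m by lia.
have -> : i.+1 == m by lia.
have -> : i = m.-1 by lia.
by rewrite -/z -f1E.
Qed.

Lemma walk n s : #|V| - size s <= n -> pth s ->
  exists c : seq V, [/\ uniq c, 3 <= size c & cycle_edges c \subset F].
Proof.
elim: n s => [|n IH] s Hn Hs; (case: (walk_step Hs) => // -[u [us Hu]]);
  case: (Hu) => /card_uniqP Hc _ _;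
  have := max_card (mem (rcons s u)); rewrite Hc size_rcons => Hc2.
  lia.
apply: (IH _ _ Hu); rewrite size_rcons; lia.
Qed.

End Walk.

Lemma mem_bigcup_seq (V : finType) (cs : seq (seq V)) e :
  reflect (exists2 c, c \in cs & e \in cycle_edges c)
          (e \in \bigcup_(c <- cs) cycle_edges c).
Proof.
elim: cs => [|c cs IH]; first by rewrite big_nil inE; constructor => -[].
rewrite big_cons inE; apply: (iffP orP).
  case=> [H|/IH [c' c'in H]]; first by exists c; rewrite ?inE ?eqxx.
  by exists c'; rewrite // inE c'in orbT.
move=> [c' ]; rewrite inE => /orP [/eqP ->|c'in] H; first by left.
by right; apply/IH; exists c'.
Qed.

Lemma decomp_n (V : finType) n (F : {set {set V}}) : #|F| <= n ->
  (forall e, e \in F -> #|e| = 2) ->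
  (forall v e, e \in F -> v \in e -> #|[set f in F | v \in f]| = 2) ->
  exists cs : seq (seq V), [/\ all (fun c => uniq c && (3 <= size c)) cs,
     uniq (flatten cs) & F = \bigcup_(c <- cs) cycle_edges c].
Proof.
elim: n F => [|n IH] F Fn F2 Fdeg.
  exists [::]; rewrite big_nil; split => //.
  by apply/eqP; rewrite -cards_eq0; lia.
case: (set_0Vmem F) => [->|[e eF]].
  by exists [::]; rewrite big_nil.
move/eqP/cards2P: (F2 _ eF) => [a [b [ab Ee]]].
have [c [uc sc CF]] : exists c : seq V, [/\ uniq c, 3 <= size c & cycle_edges c \subset F].
  apply: (@walk V a F F2 Fdeg #|V| [:: a; b]); first lia.
  split => //=; first by rewrite inE andbT.
  by case=> [|i] //= _; rewrite -Ee.
set C := cycle_edges c; set F' := F :\: C.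
have closed := cyc_closed (x0:=a) uc sc CF Fdeg.
have noC : forall v f, f \in F' -> v \in f -> v \notin c.
  move=> v f; rewrite inE => /andP [fC fF] vf; apply/negP => vc.
  move: fC; rewrite (closed (index v c)) ?index_mem ?nth_index //.
have notC : forall v (g : {set V}), v \notin c -> v \in g -> g \notin C.
  move=> v g vc vg; apply/negP => /(cycle_edgesP a) [i Hi Eg].
  by have := @mem_ed V a c uc sc i v Hi; rewrite -Eg => /(_ vg); rewrite (negbTE vc).
have [cs [all' un' EF']] : exists cs : seq (seq V), [/\ all (fun c => uniq c && (3 <= size c)) cs,
     uniq (flatten cs) & F' = \bigcup_(c <- cs) cycle_edges c].
  apply: IH.
  - have : F' \proper F.
      apply/properP; split; first exact: subsetDl.
      exists (ed a c 0); first by apply: (subsetP CF); apply: ed_in; lia.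
      by rewrite inE ed_in ?andbF //; lia.
    move/proper_card; lia.
  - by move=> f; rewrite inE => /andP [_ /F2].
  - move=> v f fF' vf.
    have -> : [set g in F' | v \in g] = [set g in F | v \in g].
      apply/setP => g; rewrite !inE; case vg: (v \in g); rewrite ?andbF ?andbT //.
      by rewrite (notC v) // (noC v f).
    by move: fF'; rewrite inE => /andP [_ fF]; exact: (Fdeg v f fF vf).
exists (c :: cs); split.
- by rewrite /= uc sc.
- rewrite /= cat_uniq uc un' andbT; apply/hasPn => w /flattenP [c' c'in wc'].
  have /andP [uc' sc'] := allP all' _ c'in.
  have wF' : ed a c' (index w c') \in F'.
    rewrite EF'; apply/mem_bigcup_seq; exists c' => //; apply: ed_in; by rewrite index_mem.
  by apply: (noC w _ wF'); rewrite !inE nth_index ?eqxx.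
- rewrite big_cons -EF'; apply/setP => f; rewrite !inE.
  case fC: (f \in C) => //=; exact: (subsetP CF).
Qed.

Import Order.TTheory GRing.Theory Num.Theory.
Local Open Scope ring_scope.

Lemma sum_ind (R : realType) (T : finType) (P : pred T) a (x : R) :
  \sum_(e | P e) (e == a)%:R * x = (P a)%:R * x.
Proof.
rewrite big_mkcond (bigD1 a) //= big1 ?addr0; first by rewrite eqxx; case: (P a); rewrite ?mul1r ?mul0r.

by move=> i /negbTE ->; case: (P i); rewrite ?mul0r.
Qed.

Lemma odd_pred' n : (0 < n)%N -> odd n.-1 = ~~ odd n.
Proof. by case: n => //= n _; rewrite negbK. Qed.

Section Alt.
Variable R : realType.
Variable V : finType.
Variable x0 : V.
Variable c : seq V.
Hypothesis uc : uniq c.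
Hypothesis sc : (3 <= size c)%N.

Definition altd (e : {set V}) : R :=
  \sum_(i < size c) (e == ed x0 c i)%:R * (-1) ^+ i.

Lemma altd0 e : e \notin cycle_edges c -> altd e = 0.
Proof.
move=> eC; apply: big1 => i _.
case: eqP => [Ee|]; last by rewrite mul0r.
by move: eC; rewrite Ee ed_in.
Qed.

Lemma altd_ed0 : altd (ed x0 c 0) = 1.
Proof.
have m0 : (0 < size c)%N by lia.
rewrite /altd (bigD1 (Ordinal m0)) //= eqxx mul1r expr0 big1 ?addr0 //.
move=> i ni; case: eqP => [/ed_inj E|]; last by rewrite mul0r.
by move: ni; rewrite -val_eqE /= E // ?eqxx //; lia.
Qed.

Lemma altd_deg (E : {set {set V}}) v : ~~ odd (size c) ->
  cycle_edges c \subset E -> deg_sum E altd v = 0.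
Proof.
move=> ev CE; rewrite /deg_sum /altd exchange_big /=.
under eq_bigr => i _ do rewrite (sum_ind (fun e => (e \in E) && (v \in e))).
have inE' i : (i < size c)%N -> ed x0 c i \in E.
  by move=> Hi; apply: (subsetP CE); apply: ed_in.
case: (boolP (v \in c)) => vc; last first.
  apply: big1 => i _; rewrite inE' //.
  case: (boolP (v \in ed x0 c i)) => H; last by rewrite mul0r.
  by move: vc; rewrite (mem_ed uc sc _ H).
set j := index v c.
have Hj : (j < size c)%N by rewrite index_mem.
have Hp := prv_lt Hj.
have -> : v = nth x0 c j by rewrite nth_index.
rewrite (bigD1 (Ordinal Hj)) //= (bigD1 (Ordinal Hp)) /=; last first.
  by rewrite -val_eqE /= eq_sym prv_neq.
rewrite big1 ?addr0.
  rewrite inE' // inE' // !mem_ed_nth // eqxx /= eqxx orbT !mul1r.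
  rewrite -signr_odd -(signr_odd _ (prv _ _)).
  have : odd (prv (size c) j) = ~~ odd j.
    move: ev; rewrite /prv; case: eqP => [->|/eqP nj] ev.
      by rewrite odd_pred' //=; lia.
    by rewrite odd_pred' ?negbK //; lia.
  by move=> ->; case: (odd j); rewrite /= ?expr0 ?expr1; lra.
move=> i /andP [ni1 ni2]; rewrite inE' // mem_ed_nth //.
move: ni1 ni2; rewrite -!val_eqE /= => /negbTE -> /negbTE ->.
by rewrite mul0r.
Qed.

End Alt.

Section Descent.
Variable R : realType.
Variable V : finType.
Variable E : {set {set V}}.
Variable blossom : {set V}.
Variable w : {set V} -> R.

Definition Fr (y : {set V} -> R) := [set e in E | (0 < y e) && (y e < 1)].
Definition tight (y : {set V} -> R) v := (v \notin blossom) || (deg_sum E y v == 1).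
Definition NT y := [set v | ~~ tight y v].
Definition noker y := forall d : {set V} -> R,
  (forall e, e \notin Fr y -> d e = 0) ->
  (forall v, tight y v -> deg_sum E d v = 0) -> forall e, d e = 0.

Lemma deg_lin (y d : {set V} -> R) t v :
  deg_sum E (fun e => y e + t * d e) v = deg_sum E y v + t * deg_sum E d v.
Proof. by rewrite /deg_sum big_split /= mulr_sumr. Qed.

Lemma cost_lin (y d : {set V} -> R) t :
  lp_cost E w (fun e => y e + t * d e) = lp_cost E w y + t * lp_cost E w d.
Proof.
rewrite /lp_cost mulr_sumr -big_split /=; apply: eq_bigr => e _; ring.
Qed.

Lemma deg_opp (d : {set V} -> R) v : deg_sum E (fun e => - d e) v = - deg_sum E d v.
Proof. by rewrite /deg_sum sumrN. Qed.

Lemma cost_opp (d : {set V} -> R) : lp_cost E w (fun e => - d e) = - lp_cost E w d.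
Proof. rewrite /lp_cost -sumrN; apply: eq_bigr => e _; ring. Qed.

Lemma mul_le (t a b : R) : 0 < b -> t <= a / b -> t * b <= a.
Proof. by move=> b0; rewrite ler_pdivlMr. Qed.

Lemma step y d e0 : lp_feasible E blossom y ->
  (forall e, e \notin Fr y -> d e = 0) ->
  (forall v, tight y v -> deg_sum E d v = 0) -> d e0 != 0 ->
  lp_cost E w d <= 0 ->
  exists y', [/\ lp_feasible E blossom y', lp_cost E w y' <= lp_cost E w y &
     (#|Fr y'| + #|NT y'| < #|Fr y| + #|NT y|)%N].
Proof.
move=> [Fnb Fb Fe] dF dT de0 cd.
pose P (i : ({set V} + V)%type) := match i with
  | inl e => (e \in Fr y) && (d e != 0)
  | inr v => [&& v \in blossom, deg_sum E y v != 1 & deg_sum E d v < 0] end.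
pose f (i : ({set V} + V)%type) := match i with
  | inl e => if 0 < d e then (1 - y e) / d e else y e / (- d e)
  | inr v => (deg_sum E y v - 1) / (- deg_sum E d v) end.
have e0F : e0 \in Fr y by apply: contraR de0 => /dF ->.
have Pe0 : P (inl e0) by rewrite /= e0F de0.
case: (@arg_minP _ R _ (inl e0) P f Pe0) => i Pi Hmin.
set t := f i.
have fpos : forall j, P j -> 0 <= f j.
  case=> [e /andP [eF de]|v /and3P [vb vy dv]] /=.
    move: eF; rewrite inE => /and3P [_ y0 y1].
    case: ifP => dp; first by apply: divr_ge0; lra.
    apply: divr_ge0; first lra.
    by rewrite oppr_ge0; move: dp; rewrite lt0r de /= => /negbT; rewrite -real_ltNge ?real0 ?num_real //; lra.
  have := Fb _ vb; move=> H; apply: divr_ge0; lra.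
have t0 : 0 <= t by apply: fpos.
have tE : t = f i by []. clearbody t.
set y' := fun e => y e + t * d e.
have degT : forall v, tight y v -> deg_sum E y' v = deg_sum E y v.
  by move=> v /dT Hv; rewrite deg_lin Hv mulr0 addr0.
have tightT : forall v, tight y v -> tight y' v.
  by move=> v Hv; move: (Hv); rewrite /tight degT.
have feas : lp_feasible E blossom y'.
  split.
  - move=> v vb; have Ht : tight y v by rewrite /tight vb.
    by rewrite degT // Fnb.
  - move=> v vb; case: (boolP (tight y v)) => Ht.
      by rewrite degT //; apply: Fb.
    move: Ht; rewrite /tight vb /= => vy.
    have := Fb _ vb; rewrite deg_lin => H1.
    case: (lerP 0 (deg_sum E d v)) => dv.
      by have := mulr_ge0 t0 dv; lra.
    have Pv : P (inr v) by rewrite /= vb vy dv.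
    have dvn : 0 < - deg_sum E d v by rewrite oppr_gt0.
    have := mul_le dvn (Hmin _ Pv) => /=.
    rewrite -tE mulrN; lra.
  - move=> e eE; rewrite /y'.
    case: (eqVneq (d e) 0) => [->|de]; first by rewrite mulr0 addr0; apply: Fe.
    have eF : e \in Fr y by apply: contraR de => /dF ->.
    have Pe : P (inl e) by rewrite /= eF de.
    have := Hmin _ Pe; move: eF; rewrite inE /= => /and3P [_ y0 y1].
    case: ifP => dp Ht; rewrite -tE in Ht.
      have H2 : t * d e <= 1 - y e := mul_le dp Ht.
      have := mulr_ge0 t0 (ltW dp); move=> H1.
      apply/andP; split; lra.
    have dn : 0 < - d e.
      by rewrite oppr_gt0; move: dp; rewrite lt0r de /= => /negbT; rewrite -real_ltNge ?real0 ?num_real //.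
    have H2 : t * - d e <= y e := mul_le dn Ht.
    have := mulr_ge0 t0 (ltW dn); move=> H1.
    rewrite mulrN in H1 H2; apply/andP; split; lra.
exists y'; split => //.
  by rewrite /y' cost_lin; have := mulr_ge0_le0 t0 cd; lra.
have subF : Fr y' \subset Fr y.
  apply/subsetP => e; rewrite !inE /y' => /andP [eE H]; rewrite eE /=.
  case: (eqVneq (d e) 0) => [de|de]; first by move: H; rewrite de mulr0 addr0.
  by move: (dF e); rewrite !inE eE /= => H'; apply: contraR de => /H' ->.
have subN : NT y' \subset NT y.
  by apply/subsetP => v; rewrite !inE; apply: contra => /tightT.
have c1 : (#|Fr y'| <= #|Fr y|)%N := subset_leq_card subF.
have c2 : (#|NT y'| <= #|NT y|)%N := subset_leq_card subN.
move: Pi tE {Hmin}; case: i => [e /andP [eF de]|v /and3P [vb vy dv]] /= tE.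
  have : Fr y' \proper Fr y.
    apply/properP; split => //; exists e => //.
    move: eF; rewrite !inE /y' => /andP [eE /andP [y0 y1]]; rewrite eE /=.
    move: tE; case: ifP => dp ->.
      by rewrite divfK ?lt0r_neq0 // subrKC ltxx andbF.
    have -> : y e / - d e * d e = - y e by field.
    by rewrite subrr ltxx.
  move=> H; have H' : (#|Fr y'| < #|Fr y|)%N := proper_card H.
  by rewrite -addSn; apply: leq_add.
have : NT y' \proper NT y.
  apply/properP; split => //; exists v; first by rewrite inE /tight vb vy.
  rewrite inE /tight vb /= negbK deg_lin tE; apply/eqP; field.
  by rewrite ?oppr_eq0 lt_eqF.
move=> H; have H' : (#|NT y'| < #|NT y|)%N := proper_card H.
by rewrite -addnS; apply: leq_add.
Qed.

Lemma descent_n n y : (#|Fr y| + #|NT y| <= n)%N -> lp_feasible E blossom y ->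
  exists y', [/\ lp_feasible E blossom y', lp_cost E w y' <= lp_cost E w y & noker y'].
Proof.
elim: n y => [|n IH] y Hn Fy;
  (case: (classic (exists (d : {set V} -> R) (e0 : {set V}), [/\ (forall e, e \notin Fr y -> d e = 0),
        (forall v, tight y v -> deg_sum E d v = 0) & d e0 != 0])) => [[d [e0 [H1 H2 H3]]]|Hno];
  last by exists y; split => // d H1 H2 e; case: (eqVneq (d e) 0) => // ne;
          exfalso; apply: Hno; exists d, e);
  (have [y' [Fy' cy' my']] : exists y', [/\ lp_feasible E blossom y', lp_cost E w y' <= lp_cost E w y &
     (#|Fr y'| + #|NT y'| < #|Fr y| + #|NT y|)%N];
  [ case: (lerP (lp_cost E w d) 0) => cd; first exact: (step Fy H1 H2 H3 cd);
    apply: (@step y (fun e => - d e) e0 Fy);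
    [ by move=> e /H1 ->; rewrite oppr0
    | by move=> v /H2; rewrite deg_opp => ->; rewrite oppr0
    | by rewrite oppr_eq0
    | by rewrite cost_opp; lra ] | ]).
  lia.
have [y'' [Fy'' cy'' ny'']] : exists y'', [/\ lp_feasible E blossom y'', lp_cost E w y'' <= lp_cost E w y' & noker y''] by apply: IH => //; lia.
by exists y''; split => //; apply: le_trans cy'' cy'.
Qed.

End Descent.

Lemma card_cond (T : finType) (A : {set T}) (P : pred T) :
  #|[set x in A | P x]| = (\sum_(x in A) (P x : nat))%N.
Proof.
rewrite -sum1_card big_mkcond /= [RHS]big_mkcond /=; apply: eq_bigr => x _.
by rewrite inE; case: (x \in A); case: (P x).
Qed.

Lemma card_sum (T : finType) (A : {set T}) : #|A| = (\sum_x (x \in A : nat))%N.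
Proof.
rewrite -sum1_card big_mkcond /=; apply: eq_bigr => x _; by case: (x \in A).
Qed.

Lemma sum_indic (R : realType) (T : finType) (P Q : pred T) :
  \sum_(x | P x) ((Q x)%:R : R) = (#|[set x | P x && Q x]|)%:R.
Proof.
rewrite -sum1_card natr_sum big_mkcond [RHS]big_mkcond /=; apply: eq_bigr => x _.
by rewrite inE; case: (P x); case: (Q x).
Qed.

Lemma sum_eq_pt (T : finType) (g h : T -> nat) :
  (forall i, h i <= g i)%N -> (\sum_i g i <= \sum_i h i)%N -> forall i, g i = h i.
Proof.
move=> hg S i; apply/eqP; rewrite eqn_leq hg andbT; apply: contraTT S => Hi.
rewrite -ltnNge (bigD1 i) //= [X in (_ < X)%N](bigD1 i) //=.
rewrite -addSn; apply: leq_add; first by rewrite ltnNge.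
by apply: leq_sum => j _.
Qed.

Section Terminal.
Variable R : realType.
Variable V : finType.
Variable E : {set {set V}}.
Variable blossom : {set V}.
Hypothesis simple : simple_graph E.
Variable y : {set V} -> R.
Hypothesis Fy : lp_feasible E blossom y.
Hypothesis Hnk : noker E blossom y.

Let F := Fr E y.
Definition Fv v := [set e in F | v \in e].

Lemma FE e : e \in F -> e \in E.
Proof. by rewrite inE => /andP []. Qed.

Lemma deg_supp (d : {set V} -> R) v : (forall e, e \notin F -> d e = 0) ->
  deg_sum E d v = \sum_(e in Fv v) d e.
Proof.
move=> dF; rewrite /deg_sum (bigID (fun e => e \in F)) /= [X in _ + X]big1 ?addr0.
  apply: eq_bigl => e; rewrite !inE; case: (e \in E); case: (v \in e); rewrite ?andbF ?andbT //=.
by move=> e /andP [_ /dF].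
Qed.

Lemma split_deg v : deg_sum E y v =
  \sum_(e in Fv v) y e + (#|[set e | ((e \in E) && (v \in e)) && (e \notin F) && (y e == 1)]|)%:R.
Proof.
rewrite /deg_sum (bigID (fun e => e \in F)) /=; congr (_ + _).
  apply: eq_bigl => e; rewrite !inE; case: (e \in E); case: (v \in e); rewrite ?andbF ?andbT //=.
transitivity (\sum_(i | (i \in E) && (v \in i) && (i \notin F)) (((y i == 1))%:R : R)); last first.
  by rewrite sum_indic.
apply: eq_bigr => e /andP [/andP [eE _] eF].
case: Fy => _ _ /(_ e eE) /andP [y0 y1].
move: eF; rewrite inE eE /= negb_and -!real_leNgt ?num_real // => /orP [H|H].
  have -> : y e = 0 by lra.
  by rewrite eq_sym oner_eq0.
have -> : y e = 1 by lra.
by rewrite eqxx.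
Qed.

Lemma tight_deg v : tight E blossom y v -> deg_sum E y v = 1.
Proof.
case: Fy => Fnb _ _; rewrite /tight => /orP [/Fnb //|/eqP //].
Qed.

Lemma Fv_ne1 v : tight E blossom y v -> #|Fv v| != 1%N.
Proof.
move=> /tight_deg; rewrite split_deg => H; apply/negP => /cards1P [e1 Fe1].
have : e1 \in Fv v by rewrite Fe1 inE.
rewrite inE => /andP []; rewrite inE => /andP [_ /andP [y0 y1]] _.
move: H; rewrite Fe1 big_set1; set k := #|_|; case: k => [|k]; first by rewrite addr0; lra.
by rewrite -natr1; have := ler0n R k; lra.
Qed.

Definition TW := [set v | tight E blossom y v && (Fv v != set0)].

Lemma count_F : (#|F| <= #|TW|)%N.
Proof.
rewrite leqNgt; apply/negP => Hlt.
pose A : 'M[R]_(#|F|, #|TW|) :=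
  \matrix_(i, j) ((((enum_val j : V) \in (enum_val i : {set V})) : nat)%:R).
have rk : (\rank A < #|F|)%N := leq_ltn_trans (rank_leq_col A) Hlt.
have K0 : kermx A != 0 by rewrite -mxrank_eq0 mxrank_ker; lia.
have [i0 [j0 Hij]] : exists i j, kermx A i j != 0.
  case: (classic (exists i j, kermx A i j != 0)) => // H; exfalso.
  move/eqP: K0; apply; apply/matrixP => i j; rewrite [RHS]mxE.
  by case: (eqVneq (kermx A i j) 0) => // ne; exfalso; apply: H; exists i, j.
set u := row i0 (kermx A).
have uA : u *m A = 0 by apply/sub_kermxP; rewrite row_sub.
have u0 : u 0 j0 != 0 by rewrite mxE.
pose d e := \sum_(k < #|F|) ((enum_val k == e)%:R * u 0 k).
have dF : forall e, e \notin F -> d e = 0.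
  move=> e eF; apply: big1 => k _.
  case: eqP => [Ek|]; last by rewrite mul0r.
  by move: eF; rewrite -Ek enum_valP.
have := Hnk dF.
have dj : d (enum_val j0) = u 0 j0.
  rewrite /d (bigD1 j0) //= eqxx mul1r big1 ?addr0 // => k kj.
  case: eqP => [/enum_val_inj Ek|]; last by rewrite mul0r.
  by move: kj; rewrite Ek eqxx.
move=> /(_ _ (enum_val j0)); rewrite dj => H; move: u0; rewrite H ?eqxx //.
move=> v vt; rewrite deg_supp //.
case: (eqVneq (Fv v) set0) => [->|vW]; first by rewrite big_set0.
have vTW : v \in TW by rewrite inE vt vW.
rewrite /d exchange_big /=.
have inner : forall k : 'I_#|F|, \sum_(e in Fv v) (enum_val k == e)%:R * u 0 k
    = ((v \in (enum_val k : {set V})) : nat)%:R * u 0 k.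
  move=> k; rewrite (eq_bigr (fun e => (e == enum_val k)%:R * u 0 k)); last first.
    by move=> e _; rewrite eq_sym.
  by rewrite sum_ind inE enum_valP.
rewrite (eq_bigr _ (fun k _ => inner k)).
transitivity ((u *m A) 0 (enum_rank_in vTW v)); last by rewrite uA mxE.
rewrite [RHS]mxE; apply: eq_bigr => k _; rewrite [A _ _]mxE enum_rankK_in // mulrC.
by [].
Qed.

Lemma deg2 v : Fv v != set0 -> tight E blossom y v /\ #|Fv v| = 2%N.
Proof.
pose NW := [set v | ~~ tight E blossom y v && (Fv v != set0)].
pose g v := #|Fv v|.
pose h v := (2 * (v \in TW) + (v \in NW))%N.
have hg : forall v, (h v <= g v)%N.
  move=> x; rewrite /h /g !inE.
  case xT: (tight E blossom y x); case xW: (Fv x != set0) => //=.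
    have := Fv_ne1 xT; move: xW; rewrite -card_gt0; set n := #|Fv x|; move=> H1 /eqP H2; lia.
  by move: xW; rewrite -card_gt0; set n := #|Fv x|; lia.
have sumg : (\sum_x g x = 2 * #|F|)%N.
  rewrite /g (eq_bigr (fun x => \sum_(e in F) (x \in e : nat))%N); last first.
    by move=> x _; rewrite /Fv card_cond.
  rewrite exchange_big /= (eq_bigr (fun e => 2%N)); first by rewrite sum_nat_const mulnC.
  move=> e eF; rewrite -card_sum; exact: simple (FE eF).
have sumh : (\sum_x h x = 2 * #|TW| + #|NW|)%N.
  by rewrite /h big_split /= -big_distrr /= -!card_sum.
have cF := count_F.
have sl : (\sum_x h x <= \sum_x g x)%N by apply: leq_sum.
have eq := sum_eq_pt hg ltac:(lia).
have NW0 : NW = set0 by apply: cards0_eq; lia.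
move=> vW.
have vT : tight E blossom y v.
  apply: contraT => vT; have : v \in NW by rewrite inE vT vW.
  by rewrite NW0 inE.
split => //; have := eq v; rewrite /g /h NW0 inE vT vW inE /=; lia.
Qed.

Lemma Fsum1 v : Fv v != set0 -> \sum_(e in Fv v) y e = 1.
Proof.
move=> vW; have [vT /eqP /cards2P [a [b [ab Eab]]]] := deg2 vW.
have := tight_deg vT; rewrite split_deg Eab.
have : a \in Fv v by rewrite Eab !inE eqxx.
have : b \in Fv v by rewrite Eab !inE eqxx orbT.
rewrite !inE => /andP [/andP [_ /andP [b0 b1]] _] /andP [/andP [_ /andP [a0 a1]] _].
rewrite big_setU1 ?inE //= big_set1.
set k := #|_|; case: k => [|k]; first by rewrite addr0.
by rewrite -natr1; have := ler0n R k; lra.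
Qed.

Lemma half e : e \in F -> y e = 2^-1.
Proof.
move=> eF.
pose d e := if e \in F then y e - 2^-1 else 0 : R.
have dF : forall e, e \notin F -> d e = 0 by move=> e' /negbTE; rewrite /d => ->.
have := Hnk dF; move=> /(_ _ e); rewrite /d eF.
move=> H; apply/eqP; rewrite -subr_eq0; apply/eqP/H => v _.
rewrite deg_supp //.
case: (eqVneq (Fv v) set0) => [->|vW]; first by rewrite big_set0.
rewrite (eq_bigr (fun e => y e - 2^-1)); last by move=> e'; rewrite inE => /andP [-> _].
rewrite sumrB Fsum1 // sumr_const (proj2 (deg2 vW)).
by rewrite mulr2n; field.
Qed.

Lemma terminal_struct :
  (forall e, e \in E -> y e \in [:: 0; 2^-1; 1]) /\
  disjoint_odd_cycles [set e in E | y e == 2^-1].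
Proof.
have EF : [set e in E | y e == 2^-1] = F.
  apply/setP => e; rewrite !inE; case eE: (e \in E) => //=.
  apply/eqP/idP => [->|H]; last by apply: half; rewrite inE eE.
  apply/andP; split; rewrite ?invr_gt0 ?invf_lt1 ?ltr0n ?ltr1n //.
split.
  move=> e eE; case: (boolP (e \in F)) => eF; first by rewrite half // !inE eqxx orbT.
  case: Fy => _ _ /(_ e eE) /andP [y0 y1].
  move: eF; rewrite inE eE /= negb_and -!real_leNgt ?num_real // => /orP [H|H].
    have -> : y e = 0 by lra.
    by rewrite !inE eqxx.
  have -> : y e = 1 by lra.
  by rewrite !inE eqxx !orbT.
rewrite EF.
have F2 : forall e, e \in F -> #|e| = 2%N by move=> e eF; apply: simple; apply: FE.
have Fdeg : forall v e, e \in F -> v \in e -> #|[set f in F | v \in f]| = 2%N.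
  move=> v e eF ve; have vW : Fv v != set0 by apply/set0Pn; exists e; rewrite inE eF ve.
  exact: (proj2 (deg2 vW)).
have [cs [all' un' EFc]] := decomp_n (leqnn #|F|) F2 Fdeg.
exists cs; split => //.
apply/allP => c cin; have /andP [uc sc] := allP all' c cin.
rewrite /odd_cycle_seq uc sc /=; apply: contraT => ev.
case: c uc sc cin ev => [//|a t] uc sc cin ev.
have CF : cycle_edges (a :: t) \subset F.
  by apply/subsetP => e eC; rewrite EFc; apply/mem_bigcup_seq; exists (a :: t).
have dF : forall e, e \notin F -> altd R a (a :: t) e = 0.
  move=> e eF; apply: altd0; apply: contra eF; exact: (subsetP CF).
have H0 : altd R a (a :: t) (ed a (a :: t) 0) = 0.
  apply: (Hnk dF) => v _; apply: altd_deg => //.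
  by apply/subsetP => e /(subsetP CF) /FE.
by move: H0; rewrite altd_ed0 // => /eqP; rewrite oner_eq0.
Qed.

End Terminal.

Section Final.
Variable R : realType.
Variable V : finType.
Variable E : {set {set V}}.
Variable blossom : {set V}.
Variable w : {set V} -> R.
Hypothesis simple : simple_graph E.

Definition good (x : {set V} -> R) := lp_feasible E blossom x /\
  ((forall e, e \in E -> x e \in [:: 0; 2^-1; 1]) /\
   disjoint_odd_cycles [set e in E | x e == 2^-1]).

Lemma key y : lp_feasible E blossom y ->
  exists x, good x /\ lp_cost E w x <= lp_cost E w y.
Proof.
move=> Fy.
have [y' [Fy' cy' nk]] := descent_n w (leqnn (#|Fr E y| + #|NT E blossom y|)) Fy.
by exists y'; split => //; split => //; exact: (terminal_struct simple Fy' nk).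
Qed.

Lemma transfer (x1 x2 : {set V} -> R) : (forall e, e \in E -> x1 e = x2 e) ->
  good x1 -> good x2 /\ lp_cost E w x1 = lp_cost E w x2.
Proof.
move=> H [[F1 F2 F3] [G1 G2]].
have dg : forall v, deg_sum E x1 v = deg_sum E x2 v.
  by move=> v; apply: eq_bigr => e /andP [eE _]; rewrite H.
split; last by apply: eq_bigr => e eE; rewrite H.
split; first split.
- by move=> v vb; rewrite -dg F1.
- by move=> v vb; rewrite -dg F2.
- by move=> e eE; rewrite -H ?F3.
split; first by move=> e eE; rewrite -H ?G1.
have -> : [set e in E | x2 e == 2^-1] = [set e in E | x1 e == 2^-1].
  by apply/setP => e; rewrite !inE; case eE: (e \in E) => //=; rewrite H.
exact: G2.
Qed.

Definition val3 (i : 'I_3) : R := if i == 0 :> nat then 0 else if i == 1 :> nat then 2^-1 else 1.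

Lemma encode x : good x -> exists g : {ffun {set V} -> 'I_3},
  forall e, e \in E -> val3 (g e) = x e.
Proof.
move=> [_ [G1 _]].
exists [ffun e => if x e == 0 then (inord 0 : 'I_3) else if x e == 2^-1 then inord 1 else inord 2].
move=> e eE; rewrite ffunE; have := G1 e eE; rewrite !inE.
rewrite /val3; case: eqP => [->|_] /=; first by rewrite inordK.
case: eqP => [->|_] /=; first by rewrite inordK.
by move=> /eqP ->; rewrite inordK.
Qed.

End Final.



From mathcomp Require Import boolp.
Unset Implicit Arguments.

Theorem theorem3 (R : realType) (V : finType) (E : {set {set V}})
  (blossom : {set V}) (w : {set V} -> R) :
  simple_graph E ->
  (exists y : {set V} -> R, lp_feasible E blossom y) ->
  exists xs : {set V} -> R,
    [/\ lp_optimal E blossom w xs,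
        (forall e, e \in E -> xs e \in [:: 0; 2^-1; 1])
      & disjoint_odd_cycles [set e in E | xs e == 2^-1]].
Proof.
move=> simple [y0 Fy0].
pose xg (g : {ffun {set V} -> 'I_3}) := fun e => val3 R (g e).
pose P g := `[< good E blossom (xg g) >].
have Pgood : forall x, good E blossom x -> exists2 g, P g & lp_cost E w x = lp_cost E w (xg g).
  move=> x Gx; have [g Hg] := encode Gx.
  have [Gg cg] := transfer w (x2 := xg g) (fun e eE => esym (Hg e eE)) Gx.
  by exists g => //; apply/asboolP.
have [x0 [G0 _]] := key w simple Fy0.
have [g0 P0 _] := Pgood _ G0.
case: (@arg_minP _ R _ g0 P (fun g => lp_cost E w (xg g)) P0) => gm /asboolP Gm Hm.
exists (xg gm); case: Gm => Fm [Vm Cm]; split => //; split => // y Fy.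
have [x [Gx cx]] := key w simple Fy.
have [g Pg cg] := Pgood _ Gx.
by apply: le_trans (Hm _ Pg) _; rewrite -cg.
Qed.
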